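(* Let $\ell\le d\le n/2$ and suppose $d$ is known in advance to the algorithm. Any non-adaptive randomized group testing algorithm that, for every defective set $I\subseteq[n]$ of size $d$, with probability at least $2/3$ detects $\ell$ defective items must make at least $\ell\log(n/d)-1$ tests.
   Context: Group testing: items $X=[n]$, unknown defective set $I\subseteq X$ with $d=|I|$. A test $Q\subseteq X$ has answer $1$ if $Q\cap I\neq\emptyset$ and $0$ otherwise. A non-adaptive (randomized) algorithm chooses all its tests before seeing any answer, then computes its output from the answers. ''Detects $\ell$ defective items'' means it outputs $L\subseteq I$ with $|L|=\ell$. ''$d$ is known in advance'' means the algorithm is given an integer $D$ with $d/4\le D\le 4d$ (in particular, the bound applies when $d$ is given exactly). Logarithms are base 2. *)

(* Defs.v *)
From HB Require Import structures.
From mathcomp Require Import all_boot all_order all_algebra.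
From mathcomp Require Import reals exp.
Set Implicit Arguments. Unset Strict Implicit. Unset Printing Implicit Defensive.
Import Order.TTheory GRing.Theory Num.Theory.
Local Open Scope ring_scope.

Definition log2 {R : realType} (x : R) : R := ln x / ln 2.

Definition answers (n m : nat) (Q : 'I_m -> {set 'I_n}) (I : {set 'I_n})
  : {ffun 'I_m -> bool} := [ffun i => Q i :&: I != set0].

(* A randomized non-adaptive algorithm with m tests is a finite probability
   space (Omega, p) of random seeds; for seed w the tests are Q w (chosen
   before any answer), and the output is dec w applied to the answer vector. *)
Definition is_distribution {R : realType} (Omega : finType) (p : Omega -> R) :=
  (forall w, 0 <= p w) /\ \sum_(w : Omega) p w = 1.

Definition detects (n : nat) (l : nat) (I L : {set 'I_n}) : bool :=
  (L \subset I) && (#|L| == l).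

Definition success_prob {R : realType} (n m : nat) (Omega : finType)
  (p : Omega -> R) (Q : Omega -> 'I_m -> {set 'I_n})
  (dec : Omega -> {ffun 'I_m -> bool} -> {set 'I_n}) (l : nat) (I : {set 'I_n})
  : R :=
  \sum_(w : Omega | detects l I (dec w (answers (Q w) I))) p w.

(* Main.v *)
Require Import Defs.
From HB Require Import structures.
From mathcomp Require Import all_boot all_order all_algebra.
From mathcomp Require Import reals exp.
From mathcomp Require Import lra ring.
Import Order.TTheory GRing.Theory Num.Theory.
Local Open Scope ring_scope.

Lemma cnt_sup (n d l : nat) (L : {set 'I_n}) :
  (#|[set I : {set 'I_n} | (#|I| == d) && detects l I L]| <= 'C(n - l, d - l))%N.
Proof.
case: (boolP (#|L| == l)) => hL; last first.
  rewrite (_ : [set I | _] = set0) ?cards0 //.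
  apply/setP => I; rewrite !inE /detects; by rewrite (negbTE hL) !andbF.
set X := [set I | _].
have inj : {in X &, injective (fun I => I :\: L)}.
  move=> I1 I2; rewrite !inE /detects => /andP[_ /andP[h1 _]] /andP[_ /andP[h2 _]] e.
  apply/setP => x; case: (boolP (x \in L)) => hx.
    by rewrite (subsetP h1 _ hx) (subsetP h2 _ hx).
  by move/setP: e => /(_ x); rewrite !inE hx.
rewrite -(card_in_imset inj).
have -> : (n - l = #|~: L|)%N by have := cardsC L; rewrite card_ord (eqP hL) => e; rewrite -{1}e addKn.
rewrite -cards_draws; apply: subset_leq_card; apply/subsetP => B /imsetP[I hI ->].
move: hI; rewrite !inE /detects => /andP[/eqP hI /andP[hs _]].
rewrite setDE subsetIr /= -setDE cardsD (setIidPr hs) hI (eqP hL) ?eqxx //.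
Qed.

Lemma cnt_w (n m d l : nat) (Qw : 'I_m -> {set 'I_n})
  (decw : {ffun 'I_m -> bool} -> {set 'I_n}) :
  (#|[set I : {set 'I_n} | (#|I| == d) && detects l I (decw (answers Qw I))]|
     <= 2 ^ m * 'C(n - l, d - l))%N.
Proof.
rewrite -sum1dep_card (partition_big (fun I => answers Qw I) predT) //=.
have -> : (2 ^ m = #|{ffun 'I_m -> bool}|)%N by rewrite card_ffun card_bool card_ord.
rewrite -sum_nat_const; apply: leq_sum => a _.
apply: leq_trans (cnt_sup n d l (decw a)).
rewrite sum1dep_card; apply: subset_leq_card; apply/subsetP => I.
by rewrite !inE => /andP[/andP[-> h] /eqP <-].
Qed.

Lemma key (R : realType) (n d l m : nat) (Omega : finType)
  (p : Omega -> R) (Q : Omega -> 'I_m -> {set 'I_n})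
  (dec : Omega -> {ffun 'I_m -> bool} -> {set 'I_n}) :
  is_distribution p ->
  (forall I : {set 'I_n}, #|I| = d -> 2 / 3 <= success_prob p Q dec l I) ->
  2 / 3 * 'C(n, d)%:R <= (2 ^ m * 'C(n - l, d - l))%:R :> R.
Proof.
move=> [p0 p1] hs.
set S := \sum_(I : {set 'I_n} | #|I| == d) success_prob p Q dec l I.
have lo : 2 / 3 * 'C(n, d)%:R <= S.
  have -> : 2 / 3 * 'C(n, d)%:R = \sum_(I : {set 'I_n} | #|I| == d) (2 / 3 : R).
    rewrite (eq_bigl (fun I => I \in [set I : {set 'I_n} | #|I| == d])); last first.
      by move=> I; rewrite inE.
    by rewrite sumr_const card_draws card_ord mulr_natr.
  by apply: ler_sum => I /eqP; apply: hs.
apply: (le_trans lo).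
have -> : S = \sum_(w : Omega) p w *
    #|[set I : {set 'I_n} | (#|I| == d) && detects l I (dec w (answers (Q w) I))]|%:R.
  rewrite /S /success_prob.
  under eq_bigr do rewrite big_mkcond /=.
  rewrite exchange_big /=; apply: eq_bigr => w _.
  rewrite -big_mkcondr.
  rewrite (eq_bigl (fun I => I \in [set I : {set 'I_n} | (#|I| == d) && detects l I (dec w (answers (Q w) I))])); last first.
    by move=> I; rewrite inE.
  by rewrite sumr_const mulr_natr.
apply: le_trans (_ : \sum_(w : Omega) p w * (2 ^ m * 'C(n - l, d - l))%:R <= _).
  apply: ler_sum => w _; apply: ler_wpM2l => //; rewrite ler_nat; exact: cnt_w.
by rewrite -big_distrl /= p1 mul1r.
Qed.

Lemma binratio (R : realType) (n d l : nat) : (0 < d)%N -> (d <= n)%N -> (l <= d)%N ->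
  (n%:R / d%:R) ^+ l * 'C(n - l, d - l)%:R <= 'C(n, d)%:R :> R.
Proof.
move=> d0 dn; elim: l => [|l IH] hl; first by rewrite expr0 mul1r !subn0.
have ld : (l < d)%N := hl.
have hnat : (n * 'C(n - l.+1, d - l.+1) <= d * 'C(n - l, d - l))%N.
  have e := mul_bin_diag (n - l) (d - l.+1).
  rewrite subnSK // -subnS in e.
  rewrite -(@leq_pmul2r (d - l)) ?subn_gt0 //.
  rewrite -[X in (_ <= X)%N]mulnA [X in (_ <= _ * X)%N]mulnC -e mulnA.
  rewrite mulnAC leq_pmul2r; last first.
    rewrite bin_gt0; apply: leq_sub2r; exact: dn.
  rewrite mulnBr mulnBr [(d * n)%N]mulnC; apply: leq_sub2l.
  by rewrite leq_mul2r dn orbT.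
apply: le_trans (IH (ltnW hl)).
rewrite exprSr -mulrA ler_wpM2l ?exprn_ge0 ?divr_ge0 //.
rewrite mulrAC ler_pdivrMr ?ltr0n // -!natrM ler_nat.
by rewrite [X in (_ <= X)%N]mulnC.
Qed.

Theorem theorem12 (R : realType) (n d l m : nat) (Omega : finType)
  (p : Omega -> R) (Q : Omega -> 'I_m -> {set 'I_n})
  (dec : Omega -> {ffun 'I_m -> bool} -> {set 'I_n}) :
  (l <= d)%N -> (d.*2 <= n)%N ->
  is_distribution p ->
  (forall I : {set 'I_n}, #|I| = d -> 2 / 3 <= success_prob p Q dec l I) ->
  l%:R * log2 (n%:R / d%:R : R) - 1 <= m%:R.
Proof.
move=> ld dn hp hs.
have m0 : 0 <= m%:R :> R := ler0n R m.
case: (posnP l) => [->|l0]; first by rewrite mul0r sub0r; clear -m0; lra.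
have d0 : (0 < d)%N := leq_trans l0 ld.
have dn' : (d <= n)%N by apply: leq_trans dn; rewrite -addnn leq_addr.
have hk := @key R n d l m Omega p Q dec hp hs.
have hb := @binratio R n d l d0 dn' ld.
set x := (n%:R / d%:R : R) in hb *.
have x0 : 0 < x by rewrite divr_gt0 // ltr0n // (leq_trans d0 dn').
have c0 : 0 < 'C(n - l, d - l)%:R :> R by rewrite ltr0n bin_gt0 leq_sub2r.
have hx : x ^+ l <= 2 ^+ m.+1.
  rewrite natrM natrX in hk.
  have : 2 / 3 * x ^+ l <= 2 ^+ m.
    have h1 : 2/3 * (x ^+ l * 'C(n - l, d - l)%:R) <= 2 ^+ m * 'C(n - l, d - l)%:R.
      apply: le_trans hk; apply: ler_wpM2l => //; apply: divr_ge0; apply: ler0n.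
    rewrite -(ler_pM2r c0); apply: le_trans h1; by rewrite mulrA.
  have : 0 <= (2 : R) ^+ m by rewrite exprn_ge0.
  rewrite exprS => h1 h2; clear -h1 h2; lra.
have l2 : 0 < ln (2 : R) by apply: ln_gt0; rewrite ltr1n.
have h : ln (x ^+ l) <= ln (2 ^+ m.+1).
  by rewrite ler_ln // posrE exprn_gt0.
rewrite (lnXn _ x0) (lnXn _ (ltr0n R 2)) -(mulr_natl (ln x)) -(mulr_natl (ln 2)) in h.
have h2 : l%:R * log2 x <= m%:R + 1.
  by rewrite /log2 mulrA ler_pdivrMr // natr1.
by rewrite lerBlDr.
Qed.
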